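(* Let $\Sigma$ be a smooth surface in $\mathbb{R}^3$ and let $\Gamma$ be a line of curvature on $\Sigma$ whose geodesic curvature on $\Sigma$ is a constant $c\neq 0$. If the torsion of $\Gamma$, regarded as a space curve in $\mathbb{R}^3$, is identically zero, then $\Gamma$ is a part of a circle, and $\Sigma$ is orthogonal to a sphere of radius $\frac{1}{|c|}$ along $\Gamma$.
   Context: A line of curvature on $\Sigma$ is a curve whose tangent vector is at every point a principal direction of $\Sigma$. *)

(* Defs.v *)
From Stdlib Require Import Reals.
From Coquelicot Require Import Coquelicot.
Open Scope R_scope.

Definition V3 := (R * R * R)%type.
Definition mk3 (x y z : R) : V3 := (x, y, z).
Definition vx (a : V3) : R := fst (fst a).
Definition vy (a : V3) : R := snd (fst a).
Definition vz (a : V3) : R := snd a.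
Definition vzero : V3 := mk3 0 0 0.
Definition vadd (a b : V3) : V3 := mk3 (vx a + vx b) (vy a + vy b) (vz a + vz b).
Definition vsub (a b : V3) : V3 := mk3 (vx a - vx b) (vy a - vy b) (vz a - vz b).
Definition vscale (k : R) (a : V3) : V3 := mk3 (k * vx a) (k * vy a) (k * vz a).
Definition dot (a b : V3) : R := vx a * vx b + vy a * vy b + vz a * vz b.
Definition cross (a b : V3) : V3 :=
  mk3 (vy a * vz b - vz a * vy b) (vz a * vx b - vx a * vz b) (vx a * vy b - vy a * vx b).
Definition vnorm (a : V3) : R := sqrt (dot a a).
Definition det3 (a b c : V3) : R := dot a (cross b c).

Definition vD (f : R -> V3) (t : R) : V3 :=
  mk3 (Derive (fun s => vx (f s)) t) (Derive (fun s => vy (f s)) t) (Derive (fun s => vz (f s)) t).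
Definition vDn (n : nat) (f : R -> V3) (t : R) : V3 :=
  mk3 (Derive_n (fun s => vx (f s)) n t) (Derive_n (fun s => vy (f s)) n t)
      (Derive_n (fun s => vz (f s)) n t).

Definition smooth1 (I : R -> Prop) (f : R -> R) : Prop :=
  forall (n : nat) (t : R), I t -> ex_derive_n f n t.

Fixpoint C2k (k : nat) (U : R -> R -> Prop) (f : R -> R -> R) : Prop :=
  (forall u v, U u v -> continuity_2d_pt f u v) /\
  match k with
  | O => True
  | S k' =>
      (forall u v, U u v -> ex_derive (fun s => f s v) u /\ ex_derive (fun s => f u s) v) /\
      C2k k' U (fun u v => Derive (fun s => f s v) u) /\
      C2k k' U (fun u v => Derive (fun s => f u s) v)
  end.
Definition smooth2 (U : R -> R -> Prop) (f : R -> R -> R) : Prop := forall k, C2k k U f.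

Definition open2 (U : R -> R -> Prop) : Prop :=
  forall u v, U u v -> exists e, 0 < e /\
    forall u' v', Rabs (u' - u) < e -> Rabs (v' - v) < e -> U u' v'.

Definition Xu (X : R -> R -> V3) (u v : R) : V3 := vD (fun s => X s v) u.
Definition Xv (X : R -> R -> V3) (u v : R) : V3 := vD (fun s => X u s) v.

Definition regular_surface (U : R -> R -> Prop) (X : R -> R -> V3) : Prop :=
  open2 U /\
  smooth2 U (fun u v => vx (X u v)) /\ smooth2 U (fun u v => vy (X u v)) /\
  smooth2 U (fun u v => vz (X u v)) /\
  (forall u v, U u v -> cross (Xu X u v) (Xv X u v) <> vzero).

Definition Nrm (X : R -> R -> V3) (u v : R) : V3 :=
  vscale (/ vnorm (cross (Xu X u v) (Xv X u v))) (cross (Xu X u v) (Xv X u v)).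
Definition Nu (X : R -> R -> V3) (u v : R) : V3 := vD (fun s => Nrm X s v) u.
Definition Nv (X : R -> R -> V3) (u v : R) : V3 := vD (fun s => Nrm X u s) v.

(* w is a principal direction at X(u,v): a nonzero tangent vector which is an
   eigenvector of the shape operator S = -dN. *)
Definition principal_direction (X : R -> R -> V3) (u v : R) (w : V3) : Prop :=
  w <> vzero /\
  exists a b k : R,
    w = vadd (vscale a (Xu X u v)) (vscale b (Xv X u v)) /\
    vadd (vscale a (Nu X u v)) (vscale b (Nv X u v)) = vscale (- k) w.

Definition inI (t0 t1 t : R) : Prop := t0 < t /\ t < t1.

Definition curve_on (U : R -> R -> Prop) (X : R -> R -> V3) (t0 t1 : R) (u v : R -> R) : Prop :=
  t0 < t1 /\ smooth1 (inI t0 t1) u /\ smooth1 (inI t0 t1) v /\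
  (forall t, inI t0 t1 t -> U (u t) (v t)).

Definition gam (X : R -> R -> V3) (u v : R -> R) (t : R) : V3 := X (u t) (v t).

Definition line_of_curvature (X : R -> R -> V3) (t0 t1 : R) (u v : R -> R) : Prop :=
  forall t, inI t0 t1 t -> principal_direction X (u t) (v t) (vD (gam X u v) t).

Definition geod_curv (X : R -> R -> V3) (u v : R -> R) (t : R) : R :=
  dot (vDn 2 (gam X u v) t) (cross (Nrm X (u t) (v t)) (vDn 1 (gam X u v) t))
  / (vnorm (vDn 1 (gam X u v) t)) ^ 3.

Definition torsion (g : R -> V3) (t : R) : R :=
  det3 (vDn 1 g t) (vDn 2 g t) (vDn 3 g t) / (vnorm (cross (vDn 1 g t) (vDn 2 g t))) ^ 2.

(* Main.v *)
Require Import Defs.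
From Stdlib Require Import Reals Lra Lia.
From Coquelicot Require Import Coquelicot.
Open Scope R_scope.

Lemma C2k_mono U k : forall f, C2k (S k) U f -> C2k k U f.
Proof.
  induction k as [|k IH]; intros f H.
  - destruct H as [H _]; split; [exact H|exact I].
  - destruct H as [H0 [H1 [H2 H3]]]. split; [exact H0|].
    split; [exact H1|]. split; apply IH; assumption.
Qed.

Lemma C2k_le U k m f : (m <= k)%nat -> C2k k U f -> C2k m U f.
Proof. induction 1; auto. intros H'; apply IHle, C2k_mono, H'. Qed.

Lemma C2k_diff U k : forall f a b, C2k k U f -> U a b -> ex_diff_n f k a b.
Proof.
  induction k as [|k IH]; intros f a b H Hab.
  - destruct H as [H _]; split; [apply H; exact Hab|exact I].
  - destruct H as [H0 [H1 [H2 H3]]]. split; [apply H0; exact Hab|].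
    destruct (H1 a b Hab) as [E1 E2].
    split; [exact E1|]. split; [exact E2|]. split; apply IH; assumption.
Qed.

Lemma open_loc2 U a b : open2 U -> U a b -> locally_2d U a b.
Proof.
  intros HU Hab. destruct (HU a b Hab) as [e [He H]].
  exists (mkposreal e He). intros u' v' H1 H2. apply H; assumption.
Qed.

Lemma DL1 f a b dx dy : DL_pol 1 f a b dx dy =
  f a b + Derive (fun s => f s b) a * dx + Derive (fun s => f a s) b * dy.
Proof.
  unfold DL_pol, differential, partial_derive; simpl. unfold Binomial.C; simpl. field.
Qed.

Lemma C2_differentiable U f a b : open2 U -> C2k 2 U f -> U a b ->
  differentiable_pt_lim f a b (Derive (fun s => f s b) a) (Derive (fun s => f a s) b).
Proof.
  intros HU Hf Hab.
  assert (Hl : locally_2d (fun u v => ex_diff_n f 2 u v) a b).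
  { destruct (open_loc2 U a b HU Hab) as [d Hd]. exists d. intros u v H1 H2.
    apply (C2k_diff U 2); [exact Hf|apply Hd; assumption]. }
  destruct (Taylor_Lagrange_2d f 1 a b Hl) as [D [d0 HD]].
  intros eps.
  set (K := Rabs D + 1).
  assert (HK : 0 < K) by (unfold K; pose proof (Rabs_pos D); lra).
  assert (Hd : 0 < Rmin d0 (eps / K)).
  { apply Rmin_pos; [apply cond_pos|]. apply Rdiv_lt_0_compat; [apply cond_pos|exact HK]. }
  exists (mkposreal _ Hd). simpl. intros u v Hu Hv.
  assert (Hu0 : Rabs (u - a) < d0) by (eapply Rlt_le_trans; [exact Hu|apply Rmin_l]).
  assert (Hv0 : Rabs (v - b) < d0) by (eapply Rlt_le_trans; [exact Hv|apply Rmin_l]).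
  specialize (HD u v Hu0 Hv0). rewrite DL1 in HD.
  set (m := Rmax (Rabs (u - a)) (Rabs (v - b))) in *.
  assert (Hm0 : 0 <= m) by (unfold m; eapply Rle_trans; [apply Rabs_pos|apply Rmax_l]).
  assert (Hm : m < eps / K).
  { unfold m; apply Rmax_lub_lt; [eapply Rlt_le_trans; [exact Hu|apply Rmin_r]|eapply Rlt_le_trans; [exact Hv|apply Rmin_r]]. }
  assert (HmK : m * K <= eps).
  { apply Rmult_lt_compat_r with (r := K) in Hm; [|exact HK].
    unfold Rdiv in Hm; rewrite Rmult_assoc, Rinv_l in Hm; lra. }
  replace (f u v - f a b - (Derive (fun s => f s b) a * (u - a) + Derive (fun s => f a s) b * (v - b)))
    with (f u v - (f a b + Derive (fun s => f s b) a * (u - a) + Derive (fun s => f a s) b * (v - b))) by ring.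
  eapply Rle_trans; [exact HD|].
  assert (D <= K) by (unfold K; pose proof (Rle_abs D); lra).
  simpl. replace (m * (m * 1)) with (m * m) by ring.
  apply Rle_trans with (K * (m * m)).
  { apply Rmult_le_compat_r; [apply Rmult_le_pos|]; assumption. }
  replace (K * (m * m)) with ((m * K) * m) by ring.
  apply Rmult_le_compat_r; assumption.
Qed.

Lemma chain U f (u v : R -> R) t du dv : open2 U -> C2k 2 U f -> U (u t) (v t) ->
  is_derive u t du -> is_derive v t dv ->
  is_derive (fun s => f (u s) (v s)) t
    (Derive (fun s => f s (v t)) (u t) * du + Derive (fun s => f (u t) s) (v t) * dv).
Proof.
  intros HU Hf Ht Hu Hv. apply is_derive_Reals.
  apply derivable_pt_lim_comp_2d; [apply (C2_differentiable U); assumption|apply is_derive_Reals; assumption..].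
Qed.

Lemma locI t0 t1 t : inI t0 t1 t -> locally t (inI t0 t1).
Proof.
  intros [H1 H2].
  assert (He : 0 < Rmin (t - t0) (t1 - t)) by (apply Rmin_pos; lra).
  exists (mkposreal _ He). intros s Hs. unfold ball in Hs; simpl in Hs.
  unfold AbsRing_ball, abs, minus, plus, opp in Hs; simpl in Hs.
  pose proof (Rmin_l (t - t0) (t1 - t)); pose proof (Rmin_r (t - t0) (t1 - t)).
  apply Rabs_def2 in Hs. split; lra.
Qed.

Lemma dplus f g t a b : is_derive f t a -> is_derive g t b -> is_derive (fun s => f s + g s) t (a + b).
Proof. intros H H0; exact (is_derive_plus f g t a b H H0). Qed.
Lemma dmult f g t a b : is_derive f t a -> is_derive g t b -> is_derive (fun s => f s * g s) t (a * g t + f t * b).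
Proof. intros H H0; exact (Derive.is_derive_mult f g t a b H H0). Qed.
Lemma exd_plus (f g : R -> R) t : ex_derive f t -> ex_derive g t -> ex_derive (fun s => f s + g s) t.
Proof. intros [a Ha] [b Hb]; exists (a + b); now apply dplus. Qed.
Lemma exd_mult (f g : R -> R) t : ex_derive f t -> ex_derive g t -> ex_derive (fun s => f s * g s) t.
Proof. intros [a Ha] [b Hb]; eexists; apply dmult; eassumption. Qed.
Lemma Derive_mult' (f g : R -> R) t : ex_derive f t -> ex_derive g t ->
  Derive (fun s => f s * g s) t = Derive f t * g t + f t * Derive g t.
Proof. intros [a Ha] [b Hb]. apply is_derive_unique.
  rewrite (is_derive_unique _ _ _ Ha), (is_derive_unique _ _ _ Hb). apply dmult; assumption. Qed.
Lemma Derive_plus' (f g : R -> R) t : ex_derive f t -> ex_derive g t ->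
  Derive (fun s => f s + g s) t = Derive f t + Derive g t.
Proof. intros [a Ha] [b Hb]. apply is_derive_unique.
  rewrite (is_derive_unique _ _ _ Ha), (is_derive_unique _ _ _ Hb). apply dplus; assumption. Qed.

Definition Sm (t0 t1 : R) (n : nat) (f : R -> R) : Prop :=
  forall k, (k < n)%nat -> forall t, inI t0 t1 t -> ex_derive (Derive_n f k) t.

Lemma Sm_ext t0 t1 n f g : (forall t, inI t0 t1 t -> f t = g t) -> Sm t0 t1 n f -> Sm t0 t1 n g.
Proof.
  intros E H k Hk t Ht.
  apply ex_derive_ext_loc with (Derive_n f k); [|apply H; auto].
  apply filter_imp with (inI t0 t1); [|apply locI; auto].
  intros s Hs. apply Derive_n_ext_loc.
  apply filter_imp with (inI t0 t1); [|apply locI; auto]. exact E.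
Qed.

Lemma Sm_S t0 t1 n f : (forall t, inI t0 t1 t -> ex_derive f t) -> Sm t0 t1 n (Derive f) -> Sm t0 t1 (S n) f.
Proof.
  intros H1 H2 k Hk t Ht. destruct k as [|k]; [apply H1; auto|].
  apply ex_derive_ext with (Derive_n (Derive f) k).
  - intros s. symmetry. transitivity (Derive_n (Derive_n f 1) k s); [|reflexivity].
    rewrite Derive_n_comp. now replace (k + 1)%nat with (S k) by lia.
  - apply H2; auto; lia.
Qed.

Lemma Sm_D t0 t1 n f : Sm t0 t1 (S n) f -> Sm t0 t1 n (Derive f).
Proof.
  intros H k Hk t Ht.
  apply ex_derive_ext with (Derive_n f (S k)).
  - intros s. transitivity (Derive_n (Derive_n f 1) k s); [|reflexivity].
    rewrite Derive_n_comp. now replace (k + 1)%nat with (S k) by lia.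
  - apply H; auto; lia.
Qed.

Lemma Sm_ex t0 t1 n f : Sm t0 t1 (S n) f -> forall t, inI t0 t1 t -> ex_derive f t.
Proof. intros H t Ht. exact (H O (Nat.lt_0_succ n) t Ht). Qed.

Lemma Sm_mono t0 t1 n f : Sm t0 t1 (S n) f -> Sm t0 t1 n f.
Proof. intros H k Hk; apply H; lia. Qed.

Lemma Sm_plus t0 t1 n : forall f g, Sm t0 t1 n f -> Sm t0 t1 n g -> Sm t0 t1 n (fun s => f s + g s).
Proof.
  induction n as [|n IH]; intros f g Hf Hg.
  - intros k Hk; lia.
  - apply Sm_S.
    + intros t Ht. apply exd_plus; [apply (Sm_ex _ _ _ _ Hf)|apply (Sm_ex _ _ _ _ Hg)]; auto.
    + apply Sm_ext with (fun s => Derive f s + Derive g s).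
      * intros t Ht. rewrite Derive_plus'; auto; [apply (Sm_ex _ _ _ _ Hf)|apply (Sm_ex _ _ _ _ Hg)]; auto.
      * apply IH; apply Sm_D; auto.
Qed.

Lemma Sm_mult t0 t1 n : forall f g, Sm t0 t1 n f -> Sm t0 t1 n g -> Sm t0 t1 n (fun s => f s * g s).
Proof.
  induction n as [|n IH]; intros f g Hf Hg.
  - intros k Hk; lia.
  - apply Sm_S.
    + intros t Ht. apply exd_mult; [apply (Sm_ex _ _ _ _ Hf)|apply (Sm_ex _ _ _ _ Hg)]; exact Ht.
    + apply Sm_ext with (fun s => Derive f s * g s + f s * Derive g s).
      * intros t Ht. rewrite Derive_mult'; [reflexivity|apply (Sm_ex _ _ _ _ Hf)|apply (Sm_ex _ _ _ _ Hg)]; exact Ht.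
      * apply Sm_plus; apply IH.
        -- apply Sm_D; exact Hf.
        -- apply Sm_mono; exact Hg.
        -- apply Sm_mono; exact Hf.
        -- apply Sm_D; exact Hg.
Qed.

Lemma Sm_smooth t0 t1 f n : smooth1 (inI t0 t1) f -> Sm t0 t1 n f.
Proof. intros H k Hk t Ht. exact (H (S k) t Ht). Qed.
Lemma Sm_comp U t0 t1 (u v : R -> R) : open2 U -> (forall t, inI t0 t1 t -> U (u t) (v t)) ->
  forall n f, C2k (S (S n)) U f -> Sm t0 t1 n u -> Sm t0 t1 n v -> Sm t0 t1 n (fun t => f (u t) (v t)).
Proof.
  intros HU Hc n. induction n as [|n IH]; intros f Hf Hu Hv.
  - intros k Hk; lia.
  - assert (Hf2 : C2k 2 U f) by (apply (C2k_le U (S (S (S n)))); [lia|exact Hf]).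
    assert (Hd : forall t, inI t0 t1 t -> is_derive (fun s => f (u s) (v s)) t
      (Derive (fun s => f s (v t)) (u t) * Derive u t + Derive (fun s => f (u t) s) (v t) * Derive v t)).
    { intros t Ht. apply (chain U); auto.
      - apply Derive_correct, (Sm_ex _ _ _ _ Hu), Ht.
      - apply Derive_correct, (Sm_ex _ _ _ _ Hv), Ht. }
    apply Sm_S.
    + intros t Ht. eexists; apply Hd, Ht.
    + apply Sm_ext with (fun t => (fun a b => Derive (fun s => f s b) a) (u t) (v t) * Derive u t
                                 + (fun a b => Derive (fun s => f a s) b) (u t) (v t) * Derive v t).
      * intros t Ht. symmetry. apply is_derive_unique, Hd, Ht.
      * destruct Hf as [_ [_ [Hfu Hfv]]].
        apply Sm_plus; apply Sm_mult.
        -- apply (IH (fun a b => Derive (fun s => f s b) a)); [exact Hfu|apply Sm_mono; exact Hu|apply Sm_mono; exact Hv].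
        -- apply Sm_D; exact Hu.
        -- apply (IH (fun a b => Derive (fun s => f a s) b)); [exact Hfv|apply Sm_mono; exact Hu|apply Sm_mono; exact Hv].
        -- apply Sm_D; exact Hv.
Qed.

Lemma dminus f g t a b : is_derive f t a -> is_derive g t b -> is_derive (fun s => f s - g s) t (a - b).
Proof. intros H H0; exact (is_derive_minus f g t a b H H0). Qed.
Lemma dconst (c t : R) : is_derive (fun _ => c) t 0.
Proof. exact (is_derive_const c t). Qed.
Lemma deq (f : R -> R) (t a b : R) : is_derive f t a -> a = b -> is_derive f t b.
Proof. intros H ->; exact H. Qed.

Definition vder (F : R -> V3) (t : R) (F' : V3) : Prop :=
  is_derive (fun s => vx (F s)) t (vx F') /\ is_derive (fun s => vy (F s)) t (vy F') /\
  is_derive (fun s => vz (F s)) t (vz F').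

Lemma v3_eq (a b : V3) : vx a = vx b -> vy a = vy b -> vz a = vz b -> a = b.
Proof. destruct a as [[a1 a2] a3], b as [[b1 b2] b3]; unfold vx, vy, vz; simpl; intros -> -> ->; reflexivity. Qed.

Ltac vsimpl := unfold vadd, vsub, vscale, cross, dot, det3, vzero, mk3, vx, vy, vz in *; simpl in *.

Lemma vder_unique F t F' : vder F t F' -> vD F t = F'.
Proof. intros [H1 [H2 H3]]. apply v3_eq; unfold vD, mk3, vx at 1, vy at 1, vz at 1; simpl;
  apply is_derive_unique; assumption. Qed.

Lemma vder_add F G t F' G' : vder F t F' -> vder G t G' -> vder (fun s => vadd (F s) (G s)) t (vadd F' G').
Proof. intros [A1 [A2 A3]] [B1 [B2 B3]]; split; [|split]; apply dplus; assumption. Qed.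
Lemma vder_sub F G t F' G' : vder F t F' -> vder G t G' -> vder (fun s => vsub (F s) (G s)) t (vsub F' G').
Proof. intros [A1 [A2 A3]] [B1 [B2 B3]]; split; [|split]; apply dminus; assumption. Qed.
Lemma vder_scale f F t f' F' : is_derive f t f' -> vder F t F' ->
  vder (fun s => vscale (f s) (F s)) t (vadd (vscale f' (F t)) (vscale (f t) F')).
Proof. intros H [A1 [A2 A3]]; split; [|split]; apply dmult; assumption. Qed.
Lemma vder_const (c : V3) t : vder (fun _ => c) t vzero.
Proof. split; [|split]; apply dconst. Qed.
Lemma vder_cross F G t F' G' : vder F t F' -> vder G t G' ->
  vder (fun s => cross (F s) (G s)) t (vadd (cross F' (G t)) (cross (F t) G')).
Proof. intros [A1 [A2 A3]] [B1 [B2 B3]]; split; [|split];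
  (eapply deq; [apply dminus; apply dmult; eassumption|]); vsimpl; ring. Qed.
Lemma vder_dot F G t F' G' : vder F t F' -> vder G t G' ->
  is_derive (fun s => dot (F s) (G s)) t (dot F' (G t) + dot (F t) G').
Proof. intros [A1 [A2 A3]] [B1 [B2 B3]];
  (eapply deq; [apply dplus; [apply dplus|]; apply dmult; eassumption|]); vsimpl; ring. Qed.

Definition nrmz (C : V3) : V3 := vscale (/ vnorm C) C.
Definition dnrmz (C C' : V3) : V3 :=
  vsub (vscale (/ vnorm C) C') (vscale (dot C C' / (vnorm C) ^ 3) C).

Lemma dot_pos (C : V3) : C <> vzero -> 0 < dot C C.
Proof. intros H. destruct C as [[a b] c]. vsimpl.
  destruct (Req_dec a 0), (Req_dec b 0), (Req_dec c 0); subst;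
  try (exfalso; apply H; reflexivity); nra. Qed.

Lemma vnorm_pos (C : V3) : C <> vzero -> 0 < vnorm C.
Proof. intros H; unfold vnorm; apply sqrt_lt_R0, dot_pos, H. Qed.

Lemma vder_nrmz C t C' : vder C t C' -> C t <> vzero -> vder (fun s => nrmz (C s)) t (dnrmz (C t) C').
Proof.
  intros HC Hn.
  assert (Hd := vder_dot C C t C' C' HC HC).
  assert (Hp := dot_pos _ Hn).
  assert (Hs := is_derive_sqrt _ _ _ Hd Hp).
  assert (HL := vnorm_pos _ Hn). unfold vnorm in HL.
  assert (Hi := is_derive_inv _ _ _ Hs (Rgt_not_eq _ _ HL)).
  assert (H := vder_scale _ _ _ _ _ Hi HC).
  unfold nrmz, dnrmz, vnorm.
  destruct H as [H1 [H2 H3]]; split; [|split]; (eapply deq; [eassumption|]);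
  set (L := sqrt (dot (C t) (C t))) in *;
  assert (L * L = dot (C t) (C t)) by (apply sqrt_sqrt; lra);
  vsimpl; field; lra.
Qed.


Lemma vx_mk3 a b c : vx (mk3 a b c) = a. Proof. reflexivity. Qed.
Lemma vy_mk3 a b c : vy (mk3 a b c) = b. Proof. reflexivity. Qed.
Lemma vz_mk3 a b c : vz (mk3 a b c) = c. Proof. reflexivity. Qed.
Lemma vx_add a b : vx (vadd a b) = vx a + vx b. Proof. reflexivity. Qed.
Lemma vy_add a b : vy (vadd a b) = vy a + vy b. Proof. reflexivity. Qed.
Lemma vz_add a b : vz (vadd a b) = vz a + vz b. Proof. reflexivity. Qed.
Lemma vx_sub a b : vx (vsub a b) = vx a - vx b. Proof. reflexivity. Qed.
Lemma vy_sub a b : vy (vsub a b) = vy a - vy b. Proof. reflexivity. Qed.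
Lemma vz_sub a b : vz (vsub a b) = vz a - vz b. Proof. reflexivity. Qed.
Lemma vx_scale k a : vx (vscale k a) = k * vx a. Proof. reflexivity. Qed.
Lemma vy_scale k a : vy (vscale k a) = k * vy a. Proof. reflexivity. Qed.
Lemma vz_scale k a : vz (vscale k a) = k * vz a. Proof. reflexivity. Qed.
Lemma vx_cross a b : vx (cross a b) = vy a * vz b - vz a * vy b. Proof. reflexivity. Qed.
Lemma vy_cross a b : vy (cross a b) = vz a * vx b - vx a * vz b. Proof. reflexivity. Qed.
Lemma vz_cross a b : vz (cross a b) = vx a * vy b - vy a * vx b. Proof. reflexivity. Qed.
Lemma vx_zero : vx vzero = 0. Proof. reflexivity. Qed.
Lemma vy_zero : vy vzero = 0. Proof. reflexivity. Qed.
Lemma vz_zero : vz vzero = 0. Proof. reflexivity. Qed.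
Lemma vx_vD F t : vx (vD F t) = Derive (fun s => vx (F s)) t. Proof. reflexivity. Qed.
Lemma vy_vD F t : vy (vD F t) = Derive (fun s => vy (F s)) t. Proof. reflexivity. Qed.
Lemma vz_vD F t : vz (vD F t) = Derive (fun s => vz (F s)) t. Proof. reflexivity. Qed.
Lemma dot_e a b : dot a b = vx a * vx b + vy a * vy b + vz a * vz b. Proof. reflexivity. Qed.
Lemma det3_e a b c : det3 a b c = dot a (cross b c). Proof. reflexivity. Qed.
#[global] Hint Rewrite vx_mk3 vy_mk3 vz_mk3 vx_add vy_add vz_add vx_sub vy_sub vz_sub
  vx_scale vy_scale vz_scale vx_cross vy_cross vz_cross vx_zero vy_zero vz_zero
  vx_vD vy_vD vz_vD det3_e dot_e : vc.
Ltac vs := autorewrite with vc in *.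

Lemma vchain U G (u v : R -> R) t du dv : open2 U ->
  C2k 2 U (fun a b => vx (G a b)) -> C2k 2 U (fun a b => vy (G a b)) -> C2k 2 U (fun a b => vz (G a b)) ->
  U (u t) (v t) -> is_derive u t du -> is_derive v t dv ->
  vder (fun s => G (u s) (v s)) t
    (vadd (vscale du (vD (fun s => G s (v t)) (u t))) (vscale dv (vD (fun s => G (u t) s) (v t)))).
Proof.
  intros HU H1 H2 H3 Ht Hu Hv.
  split; [|split].
  - eapply deq; [apply (chain U (fun a b => vx (G a b)) u v t du dv); assumption|]; vs; ring.
  - eapply deq; [apply (chain U (fun a b => vy (G a b)) u v t du dv); assumption|]; vs; ring.
  - eapply deq; [apply (chain U (fun a b => vz (G a b)) u v t du dv); assumption|]; vs; ring.
Qed.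

Lemma deqv F t A B : vder F t A -> A = B -> vder F t B.
Proof. intros H ->; exact H. Qed.

Definition SM U (X : R -> R -> V3) := smooth2 U (fun a b => vx (X a b)) /\
  smooth2 U (fun a b => vy (X a b)) /\ smooth2 U (fun a b => vz (X a b)).

Lemma sm_u U f : smooth2 U f -> smooth2 U (fun a b => Derive (fun s => f s b) a).
Proof. intros H k. destruct (H (S k)) as [_ [_ [H1 _]]]. exact H1. Qed.
Lemma sm_v U f : smooth2 U f -> smooth2 U (fun a b => Derive (fun s => f a s) b).
Proof. intros H k. destruct (H (S k)) as [_ [_ [_ H1]]]. exact H1. Qed.
Lemma sm_exu U f a b : smooth2 U f -> U a b -> ex_derive (fun s => f s b) a.
Proof. intros H Hab. destruct (H 1%nat) as [_ [H1 _]]. apply (H1 a b Hab). Qed.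
Lemma sm_exv U f a b : smooth2 U f -> U a b -> ex_derive (fun s => f a s) b.
Proof. intros H Hab. destruct (H 1%nat) as [_ [H1 _]]. apply (H1 a b Hab). Qed.

Lemma SM_u U X : SM U X -> SM U (Xu X).
Proof. intros [H1 [H2 H3]]. split; [|split]; apply sm_u; assumption. Qed.
Lemma SM_v U X : SM U X -> SM U (Xv X).
Proof. intros [H1 [H2 H3]]. split; [|split]; apply sm_v; assumption. Qed.

Lemma vder_vD F a : ex_derive (fun s => vx (F s)) a -> ex_derive (fun s => vy (F s)) a ->
  ex_derive (fun s => vz (F s)) a -> vder F a (vD F a).
Proof. intros H1 H2 H3. split; [|split]; apply Derive_correct; assumption. Qed.

Lemma SM_du U X a b : SM U X -> U a b -> vder (fun s => X s b) a (vD (fun s => X s b) a).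
Proof. intros [H1 [H2 H3]] Hab. apply vder_vD;
  [apply (sm_exu U (fun a b => vx (X a b)))|apply (sm_exu U (fun a b => vy (X a b)))|apply (sm_exu U (fun a b => vz (X a b)))]; assumption. Qed.
Lemma SM_dv U X a b : SM U X -> U a b -> vder (fun s => X a s) b (vD (fun s => X a s) b).
Proof. intros [H1 [H2 H3]] Hab. apply vder_vD;
  [apply (sm_exv U (fun a b => vx (X a b)))|apply (sm_exv U (fun a b => vy (X a b)))|apply (sm_exv U (fun a b => vz (X a b)))]; assumption. Qed.

Lemma SM_vchain U G (u v : R -> R) t du dv : open2 U -> SM U G ->
  U (u t) (v t) -> is_derive u t du -> is_derive v t dv ->
  vder (fun s => G (u s) (v s)) t
    (vadd (vscale du (vD (fun s => G s (v t)) (u t))) (vscale dv (vD (fun s => G (u t) s) (v t)))).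
Proof. intros HU [H1 [H2 H3]] Ht Hu Hv. exact (vchain U G u v t du dv HU (H1 2%nat) (H2 2%nat) (H3 2%nat) Ht Hu Hv). Qed.

Lemma dnrmz_lin C a b P Q : dnrmz C (vadd (vscale a P) (vscale b Q)) =
  vadd (vscale a (dnrmz C P)) (vscale b (dnrmz C Q)).
Proof. unfold dnrmz. set (L := vnorm C). apply v3_eq; vs; unfold Rdiv; ring. Qed.

Lemma Nu_eq U X a b : SM U X -> U a b -> cross (Xu X a b) (Xv X a b) <> vzero ->
  Nu X a b = dnrmz (cross (Xu X a b) (Xv X a b))
     (vadd (cross (vD (fun s => Xu X s b) a) (Xv X a b)) (cross (Xu X a b) (vD (fun s => Xv X s b) a))).
Proof.
  intros HS Hab Hn. unfold Nu. apply vder_unique.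
  apply (vder_nrmz (fun s => cross (Xu X s b) (Xv X s b))); [|exact Hn].
  apply (vder_cross (fun s => Xu X s b) (fun s => Xv X s b)).
  - apply (SM_du U (Xu X)); [apply SM_u; exact HS|exact Hab].
  - apply (SM_du U (Xv X)); [apply SM_v; exact HS|exact Hab].
Qed.

Lemma Nv_eq U X a b : SM U X -> U a b -> cross (Xu X a b) (Xv X a b) <> vzero ->
  Nv X a b = dnrmz (cross (Xu X a b) (Xv X a b))
     (vadd (cross (vD (fun s => Xu X a s) b) (Xv X a b)) (cross (Xu X a b) (vD (fun s => Xv X a s) b))).
Proof.
  intros HS Hab Hn. unfold Nv. apply vder_unique.
  apply (vder_nrmz (fun s => cross (Xu X a s) (Xv X a s))); [|exact Hn].
  apply (vder_cross (fun s => Xu X a s) (fun s => Xv X a s)).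
  - apply (SM_dv U (Xu X)); [apply SM_u; exact HS|exact Hab].
  - apply (SM_dv U (Xv X)); [apply SM_v; exact HS|exact Hab].
Qed.

Lemma N_curve U X (u v : R -> R) t du dv : open2 U -> SM U X -> U (u t) (v t) ->
  cross (Xu X (u t) (v t)) (Xv X (u t) (v t)) <> vzero ->
  is_derive u t du -> is_derive v t dv ->
  vder (fun s => Nrm X (u s) (v s)) t
    (vadd (vscale du (Nu X (u t) (v t))) (vscale dv (Nv X (u t) (v t)))).
Proof.
  intros HU HS Ht Hn Hu Hv.
  Time rewrite (Nu_eq U X (u t) (v t) HS Ht Hn), (Nv_eq U X (u t) (v t) HS Ht Hn).
  Time rewrite <- dnrmz_lin.
  Time eapply deqv.
  - Time apply (vder_nrmz (fun s => cross (Xu X (u s) (v s)) (Xv X (u s) (v s)))); [|exact Hn].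
    Time apply (vder_cross (fun s => Xu X (u s) (v s)) (fun s => Xv X (u s) (v s))).
    + Time apply (SM_vchain U (Xu X) u v t du dv HU (SM_u U X HS) Ht Hu Hv).
    + Time apply (SM_vchain U (Xv X) u v t du dv HU (SM_v U X HS) Ht Hu Hv).
  - Time f_equal. Time apply v3_eq; vs; ring.
Qed.

Lemma const_I (f : R -> R) t0 t1 : (forall t, inI t0 t1 t -> is_derive f t 0) ->
  forall a b, inI t0 t1 a -> inI t0 t1 b -> f a = f b.
Proof.
  intros H.
  assert (K : forall a b, inI t0 t1 a -> inI t0 t1 b -> a < b -> f a = f b).
  { intros a b [Ha1 Ha2] [Hb1 Hb2] Hab.
    destruct (MVT_cor2 f (fun _ => 0) a b Hab) as [c [Hc _]].
    - intros c Hc. apply is_derive_Reals, H. split; lra.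
    - lra. }
  intros a b Ha Hb. destruct (Rtotal_order a b) as [Hl|[He|Hg]].
  - apply K; auto.
  - subst; reflexivity.
  - symmetry; apply K; auto.
Qed.

Lemma vconst_I (F : R -> V3) t0 t1 : (forall t, inI t0 t1 t -> vder F t vzero) ->
  forall a b, inI t0 t1 a -> inI t0 t1 b -> F a = F b.
Proof.
  intros H a b Ha Hb. apply v3_eq;
  [apply (const_I (fun s => vx (F s)) t0 t1)|apply (const_I (fun s => vy (F s)) t0 t1)|apply (const_I (fun s => vz (F s)) t0 t1)];
  auto; intros t Ht; destruct (H t Ht) as [H1 [H2 H3]]; assumption.
Qed.

Lemma vder_n F n t : ex_derive (Derive_n (fun s => vx (F s)) n) t ->
  ex_derive (Derive_n (fun s => vy (F s)) n) t -> ex_derive (Derive_n (fun s => vz (F s)) n) t ->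
  vder (vDn n F) t (vDn (S n) F t).
Proof. intros H1 H2 H3. split; [|split]; apply Derive_correct; assumption. Qed.

Lemma vDn1 F t : vDn 1 F t = vD F t.
Proof. reflexivity. Qed.

Lemma vder_invnorm W t W' : vder W t W' -> W t <> vzero ->
  is_derive (fun s => / vnorm (W s)) t (- dot (W t) W' / vnorm (W t) ^ 3).
Proof.
  intros HW Hn.
  assert (Hd := vder_dot W W t W' W' HW HW).
  assert (Hp := dot_pos _ Hn).
  assert (Hs := is_derive_sqrt _ _ _ Hd Hp).
  assert (HL := vnorm_pos _ Hn). unfold vnorm in HL.
  assert (Hi := is_derive_inv _ _ _ Hs (Rgt_not_eq _ _ HL)).
  eapply deq; [exact Hi|]. unfold vnorm.
  set (L := sqrt (dot (W t) (W t))) in *.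
  assert (L * L = dot (W t) (W t)) by (apply sqrt_sqrt; lra).
  vs. field; lra.
Qed.

Lemma comp_nz C : C <> vzero -> vx C <> 0 \/ vy C <> 0 \/ vz C <> 0.
Proof.
  intros H. destruct (Req_dec (vx C) 0) as [E1|E1]; [|now left].
  destruct (Req_dec (vy C) 0) as [E2|E2]; [|now right; left].
  destruct (Req_dec (vz C) 0) as [E3|E3]; [|now right; right].
  exfalso; apply H. apply v3_eq; vs; assumption.
Qed.

Lemma indep P Q a b a' b' : cross P Q <> vzero ->
  vadd (vscale a P) (vscale b Q) = vadd (vscale a' P) (vscale b' Q) -> a = a' /\ b = b'.
Proof.
  intros Hn E.
  assert (Ex : a * vx P + b * vx Q = a' * vx P + b' * vx Q) by (apply (f_equal vx) in E; vs; exact E).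
  assert (Ey : a * vy P + b * vy Q = a' * vy P + b' * vy Q) by (apply (f_equal vy) in E; vs; exact E).
  assert (Ez : a * vz P + b * vz Q = a' * vz P + b' * vz Q) by (apply (f_equal vz) in E; vs; exact E).
  set (dx := (a - a') * vx P + (b - b') * vx Q).
  set (dy := (a - a') * vy P + (b - b') * vy Q).
  set (dz := (a - a') * vz P + (b - b') * vz Q).
  assert (Dx : dx = 0) by (unfold dx; lra).
  assert (Dy : dy = 0) by (unfold dy; lra).
  assert (Dz : dz = 0) by (unfold dz; lra).
  destruct (comp_nz _ Hn) as [H|[H|H]]; vs.
  - assert (A1 : (a - a') * (vy P * vz Q - vz P * vy Q) = dy * vz Q - dz * vy Q) by (unfold dy, dz; ring).
    assert (A2 : (b - b') * (vy P * vz Q - vz P * vy Q) = - (dy * vz P - dz * vy P)) by (unfold dy, dz; ring).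
    rewrite Dy, Dz in A1, A2.
    assert (Z1 : (a - a') * _ = 0) by (rewrite A1; ring).
    assert (Z2 : (b - b') * _ = 0) by (rewrite A2; ring).
    destruct (Rmult_integral _ _ Z1) as [W1|W1]; [|contradiction].
    destruct (Rmult_integral _ _ Z2) as [W2|W2]; [|contradiction]. split; lra.
  - assert (A1 : (a - a') * (vz P * vx Q - vx P * vz Q) = dz * vx Q - dx * vz Q) by (unfold dx, dz; ring).
    assert (A2 : (b - b') * (vz P * vx Q - vx P * vz Q) = - (dz * vx P - dx * vz P)) by (unfold dx, dz; ring).
    rewrite Dx, Dz in A1, A2.
    assert (Z1 : (a - a') * _ = 0) by (rewrite A1; ring).
    assert (Z2 : (b - b') * _ = 0) by (rewrite A2; ring).
    destruct (Rmult_integral _ _ Z1) as [W1|W1]; [|contradiction].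
    destruct (Rmult_integral _ _ Z2) as [W2|W2]; [|contradiction]. split; lra.
  - assert (A1 : (a - a') * (vx P * vy Q - vy P * vx Q) = dx * vy Q - dy * vx Q) by (unfold dx, dy; ring).
    assert (A2 : (b - b') * (vx P * vy Q - vy P * vx Q) = - (dx * vy P - dy * vx P)) by (unfold dx, dy; ring).
    rewrite Dx, Dy in A1, A2.
    assert (Z1 : (a - a') * _ = 0) by (rewrite A1; ring).
    assert (Z2 : (b - b') * _ = 0) by (rewrite A2; ring).
    destruct (Rmult_integral _ _ Z1) as [W1|W1]; [|contradiction].
    destruct (Rmult_integral _ _ Z2) as [W2|W2]; [|contradiction]. split; lra.
Qed.

Lemma vnorm_sq C : vnorm C * vnorm C = dot C C.
Proof. unfold vnorm. apply sqrt_sqrt. vs. nra. Qed.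

Lemma alg_sphere N w g gm c k L : dot N w = 0 -> L * L = dot w w -> L <> 0 ->
  c = dot g (cross N w) / L ^ 3 ->
  vadd (vadd (vscale 0 gm) (vscale c w))
    (vadd (vscale (- dot w g / L ^ 3) (cross N w)) (vscale (/ L) (vadd (cross (vscale (- k) w) w) (cross N g))))
  = vzero.
Proof.
  intros HNw HL HL0 Hc. subst c.
  transitivity (vscale (/ L ^ 3) (vadd (vadd (vscale (dot g (cross N w)) w) (vscale (- dot w g) (cross N w)))
     (vscale (L * L) (vadd (cross (vscale (- k) w) w) (cross N g))))).
  { apply v3_eq; vs; field; exact HL0. }
  rewrite HL.
  transitivity (vscale (/ L ^ 3) (vscale (dot N w) (cross w g))).
  { f_equal. apply v3_eq; vs; ring. }
  rewrite HNw. apply v3_eq; vs; ring.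
Qed.

Lemma alg_plane w g2 g3 : det3 w g2 g3 = 0 -> cross w g2 <> vzero ->
  dnrmz (cross w g2) (vadd (cross g2 g2) (cross w g3)) = vzero.
Proof.
  intros Hd Hn. set (B := cross w g2). unfold dnrmz.
  assert (HL := vnorm_pos _ Hn). fold B in HL.
  assert (HL2 := vnorm_sq B).
  set (L := vnorm B) in *.
  transitivity (vscale (/ L ^ 3) (vsub (vscale (L * L) (vadd (cross g2 g2) (cross w g3)))
     (vscale (dot B (vadd (cross g2 g2) (cross w g3))) B))).
  { apply v3_eq; vs; field; lra. }
  rewrite HL2.
  transitivity (vscale (/ L ^ 3) (vscale (det3 w g2 g3) (cross w B))).
  { f_equal. unfold B. apply v3_eq; vs; ring. }
  rewrite Hd. apply v3_eq; vs; ring.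
Qed.

Lemma nrmz_unit C : C <> vzero -> dot (nrmz C) (nrmz C) = 1.
Proof.
  intros Hn. assert (HL := vnorm_pos _ Hn). unfold nrmz.
  transitivity (/ vnorm C * / vnorm C * dot C C); [vs; ring|].
  rewrite <- vnorm_sq. field. lra.
Qed.

Lemma dot_zero a : dot a a = 0 -> a = vzero.
Proof.
  intros H. destruct a as [[x y] z]. unfold dot, vx, vy, vz in H; simpl in H.
  assert (x = 0) by nra. assert (y = 0) by nra. assert (z = 0) by nra. subst. reflexivity.
Qed.

Lemma vsub_zero a b : vsub a b = vzero -> a = b.
Proof. intros H. apply v3_eq; [apply (f_equal vx) in H|apply (f_equal vy) in H|apply (f_equal vz) in H]; vs; lra. Qed.

Lemma loc_const F P t0 t1 t F' : (forall s, inI t0 t1 s -> F s = P) -> inI t0 t1 t -> vder F t F' -> F' = vzero.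
Proof.
  intros HF Ht [H1 [H2 H3]].
  assert (L : forall (h : V3 -> R), locally t (fun s => h (F s) = h P)).
  { intros h. apply filter_imp with (inI t0 t1); [|apply locI; exact Ht]. intros s Hs. rewrite HF; auto. }
  apply v3_eq; vs.
  - rewrite <- (is_derive_unique _ _ _ (is_derive_ext_loc _ _ _ _ (L vx) H1)). apply is_derive_unique, dconst.
  - rewrite <- (is_derive_unique _ _ _ (is_derive_ext_loc _ _ _ _ (L vy) H2)). apply is_derive_unique, dconst.
  - rewrite <- (is_derive_unique _ _ _ (is_derive_ext_loc _ _ _ _ (L vz) H3)). apply is_derive_unique, dconst.
Qed.

Theorem lemma3p2 (U : R -> R -> Prop) (X : R -> R -> V3)
  (t0 t1 : R) (u v : R -> R) (c : R) :
  regular_surface U X ->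
  curve_on U X t0 t1 u v ->
  line_of_curvature X t0 t1 u v ->
  c <> 0 ->
  (forall t, inI t0 t1 t -> geod_curv X u v t = c) ->
  (forall t, inI t0 t1 t -> torsion (gam X u v) t = 0) ->
  (exists (p n : V3) (r : R), 0 < r /\ n <> vzero /\
     forall t, inI t0 t1 t ->
       vnorm (vsub (gam X u v t) p) = r /\ dot (vsub (gam X u v t) p) n = 0) /\
  (exists q : V3, forall t, inI t0 t1 t ->
       vnorm (vsub (gam X u v t) q) = / Rabs c /\
       dot (Nrm X (u t) (v t)) (vsub (gam X u v t) q) = 0).
Proof.
  intros [HU [Hsx [Hsy [Hsz Hreg]]]] [Ht01 [Hu [Hv Hc]]] Hloc Hc0 Hgc Htor.
  assert (HS : SM U X) by (split; [|split]; assumption).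
  set (g := gam X u v).
  assert (Smx : Sm t0 t1 4 (fun t => vx (g t))).
  { exact (Sm_comp U t0 t1 u v HU Hc 4 (fun a b => vx (X a b)) (Hsx 6%nat) (Sm_smooth _ _ _ _ Hu) (Sm_smooth _ _ _ _ Hv)). }
  assert (Smy : Sm t0 t1 4 (fun t => vy (g t))).
  { exact (Sm_comp U t0 t1 u v HU Hc 4 (fun a b => vy (X a b)) (Hsy 6%nat) (Sm_smooth _ _ _ _ Hu) (Sm_smooth _ _ _ _ Hv)). }
  assert (Smz : Sm t0 t1 4 (fun t => vz (g t))).
  { exact (Sm_comp U t0 t1 u v HU Hc 4 (fun a b => vz (X a b)) (Hsz 6%nat) (Sm_smooth _ _ _ _ Hu) (Sm_smooth _ _ _ _ Hv)). }
  set (W := vD g).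
  set (g2 := vDn 2 g).
  set (g3 := vDn 3 g).
  set (Nf := fun t => Nrm X (u t) (v t)).
  assert (Hg1 : forall t, inI t0 t1 t -> vder g t (W t)).
  { intros t Ht. apply vder_vD; [apply (Smx 0%nat)|apply (Smy 0%nat)|apply (Smz 0%nat)]; auto; lia. }
  assert (Hg2 : forall t, inI t0 t1 t -> vder W t (g2 t)).
  { intros t Ht. exact (vder_n g 1 t (Smx 1%nat ltac:(lia) t Ht) (Smy 1%nat ltac:(lia) t Ht) (Smz 1%nat ltac:(lia) t Ht)). }
  assert (Hg3 : forall t, inI t0 t1 t -> vder g2 t (g3 t)).
  { intros t Ht. exact (vder_n g 2 t (Smx 2%nat ltac:(lia) t Ht) (Smy 2%nat ltac:(lia) t Ht) (Smz 2%nat ltac:(lia) t Ht)). }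
  assert (Hdu : forall t, inI t0 t1 t -> is_derive u t (Derive u t)).
  { intros t Ht. apply Derive_correct. exact (Hu 1%nat t Ht). }
  assert (Hdv : forall t, inI t0 t1 t -> is_derive v t (Derive v t)).
  { intros t Ht. apply Derive_correct. exact (Hv 1%nat t Ht). }
  assert (Hw : forall t, inI t0 t1 t -> W t =
     vadd (vscale (Derive u t) (Xu X (u t) (v t))) (vscale (Derive v t) (Xv X (u t) (v t)))).
  { intros t Ht. apply vder_unique. exact (SM_vchain U X u v t _ _ HU HS (Hc t Ht) (Hdu t Ht) (Hdv t Ht)). }
  assert (HN' : forall t, inI t0 t1 t -> exists k, vder Nf t (vscale (- k) (W t))).
  { intros t Ht.
    assert (H := N_curve U X u v t _ _ HU HS (Hc t Ht) (Hreg _ _ (Hc t Ht)) (Hdu t Ht) (Hdv t Ht)).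
    destruct (Hloc t Ht) as [_ [a [b [k [E1 E2]]]]].
    fold g in E1, E2. fold (W t) in E1, E2.
    rewrite (Hw t Ht) in E1.
    destruct (indep _ _ _ _ _ _ (Hreg _ _ (Hc t Ht)) E1) as [<- <-].
    exists k. rewrite <- E2. exact H. }
  assert (HNN : forall t, inI t0 t1 t -> dot (Nf t) (Nf t) = 1).
  { intros t Ht. exact (nrmz_unit _ (Hreg _ _ (Hc t Ht))). }
  assert (HNw : forall t, inI t0 t1 t -> dot (Nf t) (W t) = 0).
  { intros t Ht. rewrite (Hw t Ht). unfold Nf, Nrm. vs. ring. }
  assert (Hc' : forall t, inI t0 t1 t -> c = dot (g2 t) (cross (Nf t) (W t)) / vnorm (W t) ^ 3).
  { intros t Ht. rewrite <- (Hgc t Ht). reflexivity. }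
  assert (HD : forall t, inI t0 t1 t -> dot (g2 t) (cross (Nf t) (W t)) <> 0).
  { intros t Ht E. apply Hc0. rewrite (Hc' t Ht), E. unfold Rdiv. ring. }
  assert (HW0 : forall t, inI t0 t1 t -> W t <> vzero).
  { intros t Ht E. apply (HD t Ht). rewrite E. vs. ring. }
  assert (HB : forall t, inI t0 t1 t -> cross (W t) (g2 t) <> vzero).
  { intros t Ht E. apply (HD t Ht).
    transitivity (dot (Nf t) (cross (W t) (g2 t))); [vs; ring|]. rewrite E. vs. ring. }
  assert (Hdet : forall t, inI t0 t1 t -> det3 (W t) (g2 t) (g3 t) = 0).
  { intros t Ht. assert (E := Htor t Ht). unfold torsion in E. fold g in E.
    change (vDn 1 g t) with (W t) in E. fold (g2 t) (g3 t) in E.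
    assert (Hp := vnorm_pos _ (HB t Ht)).
    unfold Rdiv in E. destruct (Rmult_integral _ _ E) as [E'|E']; [exact E'|].
    exfalso. apply (Rinv_neq_0_compat (vnorm (cross (W t) (g2 t)) ^ 2)); [|exact E'].
    apply pow_nonzero. lra. }
  set (tm := (t0 + t1) / 2).
  assert (Htm : inI t0 t1 tm) by (unfold tm, inI; split; lra).
  set (E := fun t => vscale (/ vnorm (W t)) (cross (Nf t) (W t))).
  set (Q := fun t => vadd (vscale c (g t)) (E t)).
  assert (HQ : forall t, inI t0 t1 t -> vder Q t vzero).
  { intros t Ht. destruct (HN' t Ht) as [k Hk].
    eapply deqv.
    - apply (vder_add (fun s => vscale c (g s)) E).
      + apply (vder_scale (fun _ => c) g t 0 (W t)); [apply dconst|apply Hg1; exact Ht].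
      + apply (vder_scale (fun s => / vnorm (W s)) (fun s => cross (Nf s) (W s))).
        * apply vder_invnorm; [apply Hg2; exact Ht|apply HW0; exact Ht].
        * apply vder_cross; [exact Hk|apply Hg2; exact Ht].
    - apply (alg_sphere _ _ _ _ _ k (vnorm (W t))).
      + apply HNw; exact Ht.
      + apply vnorm_sq.
      + apply Rgt_not_eq, vnorm_pos, HW0, Ht.
      + apply Hc'; exact Ht. }
  set (q := vscale (/ c) (Q tm)).
  assert (Hgq : forall t, inI t0 t1 t -> vsub (g t) q = vscale (- (/ c)) (E t)).
  { intros t Ht. unfold q. rewrite <- (vconst_I Q t0 t1 HQ t tm Ht Htm). unfold Q.
    apply v3_eq; vs; field; exact Hc0. }
  assert (HEE : forall t, inI t0 t1 t -> dot (E t) (E t) = 1).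
  { intros t Ht. unfold E.
    transitivity (/ vnorm (W t) * / vnorm (W t) *
      (dot (Nf t) (Nf t) * dot (W t) (W t) - dot (Nf t) (W t) * dot (Nf t) (W t))); [vs; ring|].
    rewrite (HNN t Ht), (HNw t Ht), <- vnorm_sq.
    assert (HL := vnorm_pos _ (HW0 t Ht)). field. lra. }
  assert (Hsph : forall t, inI t0 t1 t -> dot (vsub (g t) q) (vsub (g t) q) = / c * / c).
  { intros t Ht. rewrite (Hgq t Ht).
    transitivity ((- (/ c)) * (- (/ c)) * dot (E t) (E t)); [vs; ring|].
    rewrite (HEE t Ht). ring. }
  assert (Part2 : exists q : V3, forall t, inI t0 t1 t ->
       vnorm (vsub (gam X u v t) q) = / Rabs c /\
       dot (Nrm X (u t) (v t)) (vsub (gam X u v t) q) = 0).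
  { exists q. intros t Ht. split.
    - fold g. unfold vnorm. rewrite (Hsph t Ht).
      rewrite <- Rabs_inv. rewrite <- sqrt_Rsqr_abs. reflexivity.
    - fold g. change (Nrm X (u t) (v t)) with (Nf t). rewrite (Hgq t Ht). unfold E. vs. ring. }
  set (nf := fun t => nrmz (cross (W t) (g2 t))).
  assert (Hnf : forall t, inI t0 t1 t -> vder nf t vzero).
  { intros t Ht. eapply deqv.
    - apply (vder_nrmz (fun s => cross (W s) (g2 s))); [|apply HB; exact Ht].
      apply vder_cross; [apply Hg2; exact Ht|apply Hg3; exact Ht].
    - apply alg_plane; [apply Hdet; exact Ht|apply HB; exact Ht]. }
  set (n0 := nf tm).
  assert (Hn0 : forall t, inI t0 t1 t -> nf t = n0).
  { intros t Ht. apply (vconst_I nf t0 t1 Hnf); auto. }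
  assert (Hn0n0 : dot n0 n0 = 1) by (apply nrmz_unit, HB, Htm).
  set (h := fun t => dot (vsub (g t) (g tm)) n0).
  assert (Hh : forall t, inI t0 t1 t -> h t = 0).
  { intros t Ht. transitivity (h tm); [|unfold h; vs; ring].
    apply (const_I h t0 t1); auto. intros s Hs.
    eapply deq.
    - apply (vder_dot (fun s => vsub (g s) (g tm)) (fun _ => n0)).
      + apply vder_sub; [apply Hg1; exact Hs|apply vder_const].
      + apply vder_const.
    - rewrite <- (Hn0 s Hs). unfold nf, nrmz. vs. ring. }
  set (d := dot (vsub q (g tm)) n0).
  set (p := vsub q (vscale d n0)).
  assert (Hpl : forall t, inI t0 t1 t -> dot (vsub (g t) p) n0 = 0).
  { intros t Ht. transitivity (h t - d + d * dot n0 n0).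
    - unfold h, p, d. vs. ring.
    - rewrite (Hh t Ht), Hn0n0. ring. }
  assert (Hrad : forall t, inI t0 t1 t -> dot (vsub (g t) p) (vsub (g t) p) = / c * / c - d * d).
  { intros t Ht.
    transitivity (dot (vsub (g t) q) (vsub (g t) q) + 2 * d * (h t - d) + d * d * dot n0 n0).
    - unfold h, p, d. vs. ring.
    - rewrite (Hsph t Ht), (Hh t Ht), Hn0n0. ring. }
  set (r := vnorm (vsub (g tm) p)).
  assert (Hr : forall t, inI t0 t1 t -> vnorm (vsub (g t) p) = r).
  { intros t Ht. unfold r, vnorm. rewrite (Hrad t Ht), (Hrad tm Htm). reflexivity. }
  assert (Hr0 : 0 < r).
  { destruct (Rle_lt_or_eq_dec 0 r) as [H|H]; [apply sqrt_pos|exact H|].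
    exfalso. apply (HW0 tm Htm).
    apply (loc_const g p t0 t1 tm); [|exact Htm|apply Hg1; exact Htm].
    intros s Hs. apply vsub_zero, dot_zero.
    rewrite <- vnorm_sq, (Hr s Hs), <- H. ring. }
  split; [|exact Part2].
  exists p, n0, r. split; [exact Hr0|]. split.
  - intros E0. rewrite E0 in Hn0n0. vs. lra.
  - intros t Ht. fold g. split; [apply Hr; exact Ht|apply Hpl; exact Ht].
Qed.
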